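(* Let $J$ be a stable monomial ideal of $R=k[x_1,\dots,x_n]$ and let $d\ge1$. Let $T_1,\ldots,T_r$ be the monomials which form a $k$-basis of $\left((J:x_n)/J\right)_{d-1}$ (i.e. the monomials of degree $d-1$ in $(J:x_n)\setminus J$). Then $$\{x_nT_1,\ldots,x_nT_r\}=\{T\in \mathcal G(J)_d \mid x_n \text{ divides } T\}.$$ In particular $\dim_k \left((J:x_n)/J\right)_{d-1}= |\{T\in \mathcal G(J)_d \mid x_n\text{ divides } T\}|$.
   Context: For a monomial $u=x_1^{a_1}\cdots x_n^{a_n}$, $m(u)=\max\{j: a_j>0\}$. A monomial ideal $J$ is stable if for every monomial $w\in J$ and every $j<m(w)$, the monomial $x_jw/x_{m(w)}$ lies in $J$. $\mathcal G(J)$ is the set of minimal monomial generators of $J$ and $\mathcal G(J)_d$ those of degree $d$. *)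

(* Defs.v *)
From mathcomp Require Import all_boot all_order.
From mathcomp Require Import boolp.
Set Implicit Arguments. Unset Strict Implicit. Unset Printing Implicit Defensive.

(* Monomials of k[x_1,...,x_n] are encoded by their exponent vectors
   (x_{i+1} <-> index i : 'I_n).  Multiplication of monomials is addition
   of exponent vectors. *)
Definition mono (n : nat) := {ffun 'I_n -> nat}.

Definition mdeg n (u : mono n) : nat := \sum_(i < n) u i.
Definition mmul n (u v : mono n) : mono n := [ffun i => u i + v i].
Definition xvar n (j : 'I_n) : mono n := [ffun i => nat_of_bool (i == j)].
Definition mdvd n (u v : mono n) : Prop := forall i, u i <= v i.

(* A monomial ideal J of k[x_1..x_n] is determined by the set of monomials it
   contains; this set is closed under multiplication by monomials. *)
Definition monomial_ideal n (J : pred (mono n)) : Prop :=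
  forall u v : mono n, J u -> J (mmul u v).

(* w * x_j / x_i  (used with x_i dividing w) *)
Definition mshift n (w : mono n) (j i : 'I_n) : mono n :=
  [ffun k => w k - nat_of_bool (k == i) + nat_of_bool (k == j)].

Definition is_mmax n (w : mono n) (i : 'I_n) : Prop :=
  0 < w i /\ forall k : 'I_n, i < k -> w k = 0.

Definition stable n (J : pred (mono n)) : Prop :=
  forall (w : mono n) (i j : 'I_n), J w -> is_mmax w i -> j < i -> J (mshift w j i).

Definition colon n (J : pred (mono n)) (j : 'I_n) : pred (mono n) :=
  fun u => J (mmul u (xvar j)).

Definition mingen n (J : pred (mono n)) (u : mono n) : Prop :=
  J u /\ forall v : mono n, J v -> mdvd v u -> v = u.

Definition lift_box n b (v : {ffun 'I_n -> 'I_b}) : mono n :=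
  [ffun i => nat_of_ord (v i)].

(* dim_k ((J : x_n)/J)_{d-1}: the number of monomials of degree d-1 in
   (J : x_n) \ J (they form a k-basis).  Such monomials have all exponents < d. *)
Definition dim_colon_quot n (J : pred (mono n.+1)) (d : nat) : nat :=
  #|[set v : {ffun 'I_n.+1 -> 'I_d} |
      (mdeg (lift_box v) == d.-1) && colon J ord_max (lift_box v) && ~~ J (lift_box v)]|.

(* |{T in G(J)_d | x_n divides T}|; such T have all exponents <= d. *)
Definition card_gens_xn n (J : pred (mono n.+1)) (d : nat) : nat :=
  #|[set v : {ffun 'I_n.+1 -> 'I_d.+1} |
      `[< mingen J (lift_box v) >] && (mdeg (lift_box v) == d) && (0 < v ord_max)]|.

(* Main.v *)
Require Import Defs.
From mathcomp Require Import all_boot all_order.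
From mathcomp Require Import boolp.
From mathcomp Require Import zify.

Section Aux.
Variable n : nat.
Implicit Types u v w : mono n.

Lemma mdegM u v : mdeg (mmul u v) = mdeg u + mdeg v.
Proof. rewrite /mdeg -big_split; apply: eq_bigr => i _; by rewrite ffunE. Qed.

Lemma mdegX (j : 'I_n) : mdeg (xvar j) = 1.
Proof.
rewrite /mdeg (bigD1 j) //= ffunE eqxx big1 // => i hi.
by rewrite ffunE (negbTE hi).
Qed.

Lemma entry_le u (i : 'I_n) : u i <= mdeg u.
Proof. by rewrite /mdeg (bigD1 i) //= leq_addr. Qed.

Lemma mmulC u v : mmul u v = mmul v u.
Proof. by apply/ffunP => i; rewrite !ffunE addnC. Qed.

Lemma mono_dvd {J : pred (mono n)} {u v} :
  monomial_ideal J -> J u -> mdvd u v -> J v.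
Proof.
move=> hJ Ju huv.
have -> : v = mmul u [ffun k => v k - u k].
  by apply/ffunP => k; rewrite !ffunE subnKC.
exact: hJ.
Qed.
End Aux.
Arguments mono_dvd {n J u v}.

Lemma part1 (n : nat) (J : pred (mono n.+1)) (d : nat) :
  monomial_ideal J -> stable J -> 1 <= d ->
  (forall T : mono n.+1,
     (mingen J T /\ mdeg T = d /\ 0 < T ord_max) <->
     (exists T' : mono n.+1,
        [/\ mdeg T' = d.-1, colon J ord_max T', ~ J T'
          & T = mmul (xvar ord_max) T'])).
Proof.
move=> hJ hS hd T; split.
- move=> [[JT hmin] [hdeg hpos]].
  set T' : mono n.+1 := [ffun i => T i - (i == ord_max)].
  have eT : T = mmul (xvar ord_max) T'.
    apply/ffunP => k; rewrite !ffunE.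
    case: (eqVneq k ord_max) => [->|hk] /=; first by rewrite /=; lia.
    by rewrite subn0.
  exists T'; split => //.
  + by move: hdeg; rewrite eT mdegM mdegX add1n => <-.
  + by rewrite /colon mmulC -eT.
  + move=> JT'.
    have hdv : mdvd T' T by move=> k; rewrite ffunE leq_subr.
    have := hmin _ JT' hdv => /ffunP /(_ ord_max).
    rewrite ffunE eqxx => h.
    by move: h hpos => /=; lia.
- move=> [T' [hdeg hcol hnJ eT]].
  have JT : J T by move: hcol; rewrite /colon mmulC -eT.
  have hTm : 0 < T ord_max by rewrite eT !ffunE eqxx.
  split; last split => //.
    split => // v Jv hdv.
    case: (pickP (fun i => v i < T i)) => [i hi | hnone]; last first.
      apply/ffunP => k; apply/eqP; rewrite eqn_leq hdv /=.
      by move: (hnone k) => /= /negbT; rewrite -leqNgt.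
    exfalso; apply: hnJ.
    case: (eqVneq i ord_max) => [ei | ni].
      apply: (mono_dvd hJ Jv) => k.
      move: (hdv k) (f_equal (fun f : mono n.+1 => f k) eT); rewrite !ffunE.
      case: (eqVneq k ord_max) => [ek|nk] /=.
        by move: hi; rewrite ei -ek; lia.
      by lia.
    set u : mono n.+1 := [ffun k => T k - (k == i)].
    have Ju : J u.
      apply: (mono_dvd hJ Jv) => k; rewrite ffunE.
      case: (eqVneq k i) => [->|nk] /=; first by lia.
      by rewrite subn0.
    have hmax : is_mmax u ord_max.
      split; first by rewrite ffunE eq_sym (negbTE ni) subn0.
      by move=> k; rewrite ltnNge -ltnS ltn_ord.
    have hil : i < (@ord_max n).
      have : (i : nat) != n by apply: contra ni => /eqP h; apply/eqP/val_inj.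
      by move: (ltn_ord i) => /=; lia.
    have := hS _ _ _ Ju hmax hil.
    have -> : mshift u i ord_max = T'; last by [].
    apply/ffunP => k.
    move: (f_equal (fun f : mono n.+1 => f k) eT) (hdv k).
    rewrite !ffunE.
    case: (eqVneq k i) => [ek|nk]; case: (eqVneq k ord_max) => [em|nm] /=.
    + by move: ni; rewrite -ek em eqxx.
    + by rewrite ek; move: hi; lia.
    + by lia.
    + by lia.
  by move: hdeg; rewrite eT mdegM mdegX; lia.
Qed.

Theorem lemma3p8 (n : nat) (J : pred (mono n.+1)) (d : nat) :
  monomial_ideal J -> stable J -> 1 <= d ->
  (forall T : mono n.+1,
     (mingen J T /\ mdeg T = d /\ 0 < T ord_max) <->
     (exists T' : mono n.+1,
        [/\ mdeg T' = d.-1, colon J ord_max T', ~ J T'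
          & T = mmul (xvar ord_max) T'])) /\
  dim_colon_quot J d = card_gens_xn J d.
Proof.
move=> hJ hS hd.
have P1 := @part1 n J d hJ hS hd.
split => //.
case: d hd P1 => [//|d] _ P1.
pose f (v : {ffun 'I_n.+1 -> 'I_d.+1}) : {ffun 'I_n.+1 -> 'I_d.+2} :=
  [ffun i => inord (v i + (i == ord_max))].
have fE v i : (f v i : nat) = v i + (i == ord_max).
  rewrite ffunE inordK //; move: (ltn_ord (v i)); case: (i == ord_max) => /=; lia.
have finj : injective f.
  move=> v1 v2 h; apply/ffunP => i; apply/val_inj.
  by move: (f_equal (fun g : {ffun 'I_n.+1 -> 'I_d.+2} => (g i : nat)) h) => /=; rewrite !fE => /addIn.
rewrite /dim_colon_quot /card_gens_xn -(card_imset _ finj).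
apply: eq_card => w; rewrite [in RHS]inE; apply/idP/idP.
- case/imsetP => v; rewrite inE => /andP [/andP [hdeg hcol] hnJ] ->.
  have el : lift_box (f v) = mmul (xvar ord_max) (lift_box v).
    by apply/ffunP => i; rewrite [LHS]ffunE fE !ffunE addnC.
  have := (P1 (lift_box (f v))).2.
  case.
    exists (lift_box v); split => //; first exact/eqP.
    exact/negP.
  move=> hm [hdg hp]; rewrite hdg eqxx andbT.
  rewrite fE eqxx addn1 andbT; apply/asboolP; exact hm.
- case/andP => [/andP [/asboolP hm /eqP hdg] hp].
  have hp' : 0 < lift_box w ord_max by rewrite /lift_box ffunE.
  have [T' [hdeg hcol hnJ eT]] := (P1 (lift_box w)).1 (conj hm (conj hdg hp')).
  have hT'le i : T' i < d.+1 by rewrite ltnS; move: hdeg => /= <-; exact: entry_le.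
  apply/imsetP; exists [ffun i => inord (T' i)].
    have el : lift_box [ffun i => (inord (T' i) : 'I_d.+1)] = T'.
      by apply/ffunP => i; rewrite !ffunE inordK.
    by rewrite inE el hdeg eqxx hcol /=; apply/negP.
  apply/ffunP => i; apply/val_inj => /=; rewrite fE ffunE inordK //.
  by move: (f_equal (fun g : mono n.+1 => g i) eT); rewrite !ffunE addnC.
Qed.
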